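(* Let $p\ge3$ be a prime power. Then for every $m\ge1$, $\mathfrak L(p,0)$ has a weak (square) representation over a finite set of size $p^{2m}$.
   Context: $\mathfrak L(p,0)$ (for $p\ge3$) is the finite symmetric integral relation algebra with atoms $1',a_0,\dots,a_p$, where for $0\le i,j\le p$, $i\ne j$: $a_i;a_i=1'+a_i$ and $a_i;a_j=0'\cdot\overline{a_i+a_j}$ with $0'=\overline{1'}$. A weak square representation over a set $D$ is an injective map $\theta$ into $\mathcal P(D\times D)$ with $0^\theta=\emptyset$, $1^\theta=D\times D$, $(x\cdot y)^\theta=x^\theta\cap y^\theta$, $(1')^\theta=$ the identity relation on $D$, $\breve x^\theta=(x^\theta)^{-1}$, $(x;y)^\theta=x^\theta|y^\theta$ (relational composition); it need not respect $+$ or complement. *)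

(* Defs.v *)
From mathcomp Require Import all_boot.
Set Implicit Arguments. Unset Strict Implicit. Unset Printing Implicit Defensive.

Definition prime_power (p : nat) : Prop :=
  exists q k : nat, prime q /\ 0 < k /\ p = q ^ k.

(* Atoms of L(p,0): None = identity 1', Some i = a_i for i in {0..p}. *)
Definition atom (p : nat) := option 'I_p.+1.

(* Elements of L(p,0): sets of atoms (finite relation algebra = complex
   algebra of its atom structure). *)
Definition Lelt (p : nat) := {set atom p}.

Definition atom_comp (p : nat) (x y : atom p) : {set atom p} :=
  match x, y with
  | None, _ => [set y]
  | _, None => [set x]
  | Some i, Some j =>
      if i == j then [set None; Some i]
      else [set z : atom p | match z with
                             | None => false
                             | Some k => (k != i) && (k != j) end]
  end.

Definition Lcomp (p : nat) (X Y : Lelt p) : Lelt p :=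
  [set z | [exists x in X, exists y in Y, z \in atom_comp x y]].

(* Converse: L(p,0) is symmetric, every atom is self-converse. *)
Definition Lconv (p : nat) (X : Lelt p) : Lelt p := X.

Definition Lone (p : nat) : Lelt p := setT.
Definition Lzero (p : nat) : Lelt p := set0.
Definition Lid (p : nat) : Lelt p := [set None].

Definition rel_comp (D : finType) (R S : {set D * D}) : {set D * D} :=
  [set u | [exists d, ((u.1, d) \in R) && ((d, u.2) \in S)]].
Definition rel_inv (D : finType) (R : {set D * D}) : {set D * D} :=
  [set u | (u.2, u.1) \in R].
Definition rel_id (D : finType) : {set D * D} := [set u | u.1 == u.2].

Definition weak_rep (p : nat) (D : finType) (theta : Lelt p -> {set D * D}) : Prop :=
  injective theta /\
  theta (Lzero p) = set0 /\
  theta (Lone p) = setT /\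
  (forall x y, theta (x :&: y) = theta x :&: theta y) /\
  theta (Lid p) = rel_id D /\
  (forall x, theta (Lconv x) = rel_inv (theta x)) /\
  (forall x y, theta (Lcomp x y) = rel_comp (theta x) (theta y)).

(* Main.v *)
Require Import Defs.
From mathcomp Require Import all_boot.
From mathcomp Require Import all_algebra all_field.
From mathcomp Require Import ring zify.

Set Implicit Arguments. Unset Strict Implicit.

Section Geo.
Import GRing.Theory.
Local Open Scope ring_scope.

Variable F : finFieldType.
Variable p : nat.
Hypothesis HF : #|F| = p.
Hypothesis Hp3 : (3 <= p)%N.

Definition vsub (a b : F * F) : F * F := (a.1 - b.1, a.2 - b.2).
Definition vadd (a b : F * F) : F * F := (a.1 + b.1, a.2 + b.2).
Definition vsc (c : F) (a : F * F) : F * F := (c * a.1, c * a.2).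
Definition det (d v : F * F) : F := d.1 * v.2 - d.2 * v.1.

Lemma cardO : #|{: option F}| = p.+1. Proof. by rewrite card_option HF. Qed.
Definition g (i : 'I_p.+1) : option F := enum_val (cast_ord (esym cardO) i).
Definition ginv (o : option F) : 'I_p.+1 := cast_ord cardO (enum_rank o).
Lemma ginvK o : g (ginv o) = o.
Proof. by rewrite /g /ginv cast_ordK enum_rankK. Qed.
Lemma g_inj : injective g.
Proof. by move=> i j /enum_val_inj /cast_ord_inj. Qed.

Definition r (i : 'I_p.+1) : F * F :=
  match g i with None => (0, 1) | Some t => (1, t) end.
Definition P (i : 'I_p.+1) (v : F * F) : bool := det (r i) v == 0.

Lemma r_neq0 i : r i != (0,0).
Proof.
rewrite /r; case: (g i) => [t|]; rewrite xpair_eqE ?eqxx ?oner_eq0 ?andbF ?andFb //.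
Qed.

Lemma det_r i j : i != j -> det (r i) (r j) != 0.
Proof.
move=> nij; have: g i != g j by apply: contra nij => /eqP/g_inj ->.
rewrite /det /r; case: (g i) => [s|]; case: (g j) => [t|] //= Hst.
- rewrite mul1r mulr1 subr_eq0; by apply: contra Hst => /eqP ->.
- by rewrite mul1r mulr0 subr0 oner_eq0.
- by rewrite mul0r mul1r sub0r oppr_eq0 oner_eq0.
Qed.

Lemma det_sc d c v : det d (vsc c v) = c * det d v.
Proof. by rewrite /det /vsc /=; ring. Qed.
Lemma det_sub d w a : det d (vsub w a) = det d w - det d a.
Proof. by rewrite /det /vsub /=; ring. Qed.
Lemma det_self d : det d d = 0.
Proof. by rewrite /det mulrC subrr. Qed.
Lemma P0 i : P i (0,0).
Proof. by rewrite /P /det /= !mulr0 subrr eqxx. Qed.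
Lemma vsc_eq0 c v : v != (0,0) -> (vsc c v == (0,0)) = (c == 0).
Proof.
case: v => a b nz; rewrite /vsc /= xpair_eqE !mulf_eq0.
case: (c == 0) => //=; rewrite xpair_eqE in nz; exact: negbTE.
Qed.
Lemma vsub_eq0 w a : (vsub w a == (0,0)) = (w == a).
Proof. by case: w => ? ?; case: a => ? ?; rewrite /vsub /= !xpair_eqE !subr_eq0. Qed.
Lemma vsub0 w : vsub w (0,0) = w.
Proof. by case: w => ? ?; rewrite /vsub /= !subr0. Qed.

Lemma L1 i j v : i != j -> P i v -> P j v -> v = (0,0).
Proof.
move=> nij /eqP Pi /eqP Pj.
have hD := det_r nij.
have E1 : det (r i) (r j) * v.1 = (r j).1 * det (r i) v - (r i).1 * det (r j) v
  by rewrite /det; ring.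
have E2 : det (r i) (r j) * v.2 = (r j).2 * det (r i) v - (r i).2 * det (r j) v
  by rewrite /det; ring.
rewrite Pi Pj !mulr0 subr0 in E1 E2.
move/eqP: E1; rewrite mulf_eq0 (negbTE hD) /= => /eqP e1.
move/eqP: E2; rewrite mulf_eq0 (negbTE hD) /= => /eqP e2.
by case: v e1 e2 {Pi Pj} => a b /= -> ->.
Qed.

Lemma exists_line v : v != (0,0) -> exists i, P i v.
Proof.
case: v => a b nz.
case: (eqVneq a 0) => [a0|a0].
- exists (ginv None); rewrite /P /r ginvK /det /= a0.
  by rewrite mul0r mulr0 subr0 eqxx.
- exists (ginv (Some (b / a))); rewrite /P /r ginvK /det /=.
  by rewrite mul1r divfK // subrr eqxx.
Qed.

Definition cls (v : F * F) : atom p :=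
  if v == (0,0) then None else [pick i | P i v].

Lemma clsN v : (cls v == None) = (v == (0,0)).
Proof.
rewrite /cls; case: (eqVneq v (0,0)) => [_|nz] //=.
case: (pickP (fun i => P i v)) => // H. have [i Pi] := exists_line nz. by rewrite H in Pi.
Qed.

Lemma clsS v i : (cls v == Some i) = (v != (0,0)) && P i v.
Proof.
rewrite /cls; case: (eqVneq v (0,0)) => [_|nz] //=.
case: (pickP (fun i => P i v)) => [j Pj | H].
- rewrite -[Some j == Some i]/(j == i).
  case: (eqVneq j i) => [eji | nji]; first by rewrite -eji Pj.
  apply/esym/negbTE/negP => Pi; move/eqP: nz; apply; exact: L1 nji Pj Pi.
- have [k Pk] := exists_line nz. by rewrite H in Pk.
Qed.

Lemma clsSP v i : cls v = Some i <-> v != (0,0) /\ P i v.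
Proof.
split; first by move/eqP; rewrite clsS => /andP.
by case=> h1 h2; apply/eqP; rewrite clsS h1 h2.
Qed.

Lemma cls0 : cls (0,0) = None.
Proof. by apply/eqP; rewrite clsN. Qed.

Lemma cls_surj z : exists w, cls w = z.
Proof.
case: z => [i|]; last by exists (0,0); exact: cls0.
exists (r i); apply/clsSP; split; first exact: r_neq0.
by rewrite /P det_self eqxx.
Qed.

Lemma cls_sym a b : cls (vsub a b) = cls (vsub b a).
Proof.
have E0 : (vsub b a == (0,0)) = (vsub a b == (0,0)) by rewrite !vsub_eq0 eq_sym.
have EP : forall i, P i (vsub b a) = P i (vsub a b).
  move=> i; rewrite /P.
  have -> : det (r i) (vsub b a) = - det (r i) (vsub a b) by rewrite /det /vsub /=; ring.
  by rewrite oppr_eq0.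
rewrite /cls E0; case: ifP => // _; apply: eq_pick => i /=; by rewrite EP.
Qed.

Lemma Puniq w k i : w != (0,0) -> P k w -> (k == i) = P i w.
Proof.
move=> w0 Pk; case: (eqVneq k i) => [<-|nki]; first by rewrite Pk.
apply/esym/negbTE/negP => Piw; move/eqP: w0; apply; exact: L1 nki Pk Piw.
Qed.

Lemma sameL i w :
  (exists a, [/\ a != (0,0), P i a, vsub w a != (0,0) & P i (vsub w a)]) <-> P i w.
Proof.
split.
  case=> a [_ Pa _ Pwa]; move: Pwa; by rewrite /P det_sub (eqP Pa) subr0.
move=> Pw.
have [x [x0 x1]] : exists x : F, x != 0 /\ x != 1.
  have : (0 < #|~: [set (0%R:F); (1%R:F)]|)%N.
    move: (cardsC [set (0%R:F); (1%R:F)]); rewrite cards2 HF; case: (_ != _) => /= ?; lia.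
  case/card_gt0P => x; rewrite !inE negb_or => /andP[x0 x1]; by exists x.
case: (eqVneq w (r i)) => [wd | wd].
- have E : vsub (r i) (vsc x (r i)) = vsc (1 - x) (r i).
    by rewrite /vsub /vsc; case: (r i) => a b /=; congr (_, _); ring.
  exists (vsc x (r i)); split.
  + by rewrite vsc_eq0 // r_neq0.
  + by rewrite /P det_sc det_self mulr0 eqxx.
  + by rewrite wd E vsc_eq0 ?r_neq0 // subr_eq0 eq_sym.
  + by rewrite wd E /P det_sc det_self mulr0 eqxx.
- exists (r i); split.
  + exact: r_neq0.
  + by rewrite /P det_self eqxx.
  + by rewrite vsub_eq0.
  + by rewrite /P det_sub det_self subr0.
Qed.

Lemma diffL i j w : i != j ->
  (exists a, [/\ a != (0,0), P i a, vsub w a != (0,0) & P j (vsub w a)]) <->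
  [&& w != (0,0), ~~ P i w & ~~ P j w].
Proof.
move=> nij; split.
  case=> a [a0 Pa wa0 Pwa].
  have PjA : P j w -> P j a.
    move=> Pjw; move: Pwa; rewrite /P det_sub (eqP Pjw) sub0r oppr_eq0 //.
  have nPiw : ~~ P i w.
    apply/negP => Piw; move/eqP: wa0; apply; apply: (L1 nij) => //.
    by rewrite /P det_sub (eqP Piw) (eqP Pa) subrr eqxx.
  have nPjw : ~~ P j w.
    apply/negP => Pjw; move/eqP: a0; apply; exact: (L1 nij Pa (PjA Pjw)).
  rewrite nPiw nPjw andbT andbT.
  apply/negP => /eqP w0; move: nPjw; by rewrite w0 P0.
case/and3P => w0 nPi nPj.
have hD := det_r nij.
have E : vsub w (vsc (det w (r j) / det (r i) (r j)) (r i)) =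
     vsc (det (r i) w / det (r i) (r j)) (r j).
  rewrite /vsub /vsc /det; move: hD; rewrite /det.
  case: w {w0 nPi nPj} => w1 w2; case: (r i) => d1 d2; case: (r j) => e1 e2 /= hD.
  by congr (_, _); field.
exists (vsc (det w (r j) / det (r i) (r j)) (r i)); split.
- rewrite vsc_eq0 ?r_neq0 // mulf_eq0 invr_eq0 (negbTE hD) orbF.
  have -> : det w (r j) = - det (r j) w by rewrite /det; ring.
  by rewrite oppr_eq0.
- by rewrite /P det_sc det_self mulr0 eqxx.
- by rewrite E vsc_eq0 ?r_neq0 // mulf_eq0 invr_eq0 (negbTE hD) orbF.
- by rewrite E /P det_sc det_self mulr0 eqxx.
Qed.

Lemma keyL (x y : atom p) w :
  (exists a, cls a = x /\ cls (vsub w a) = y) <-> cls w \in atom_comp x y.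
Proof.
case: x => [i|]; last first.
  rewrite /atom_comp in_set1; split.
  - by case=> a [/eqP]; rewrite clsN => /eqP ->; rewrite vsub0 => ->.
  - by move=> /eqP h; exists (0,0); rewrite cls0 vsub0.
case: y => [j|]; last first.
  rewrite /atom_comp in_set1; split.
  - case=> a [ha /eqP]; rewrite clsN vsub_eq0 => /eqP wa. by rewrite wa ha.
  - move=> /eqP h; exists w; split => //. by apply/eqP; rewrite clsN vsub_eq0.
have E : (exists a, cls a = Some i /\ cls (vsub w a) = Some j) <->
   (exists a, [/\ a != (0,0), P i a, vsub w a != (0,0) & P j (vsub w a)]).
  split; case=> a H; exists a; move: H.
  - by case=> /clsSP [? ?] /clsSP [? ?]; split.
  - by case=> ? ? ? ?; split; apply/clsSP; split.
apply: iff_trans E _; rewrite /atom_comp.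
case: (eqVneq i j) => [<- | nij].
  apply: iff_trans (sameL _ _) _.
  rewrite !inE clsN clsS; case: eqP => [->|_] /=; last by [].
  by rewrite P0.
apply: iff_trans (diffL w nij) _.
rewrite inE; case E2: (cls w) => [k|].
- move: E2 => /clsSP [w0 Pk].
  by rewrite w0 /= -(@Puniq w k i w0 Pk) -(@Puniq w k j w0 Pk).
- move: E2 => /eqP; rewrite clsN => /eqP ->. by rewrite eqxx.
Qed.

Lemma compP w X Y :
  cls w \in Lcomp X Y <-> exists a, cls a \in X /\ cls (vsub w a) \in Y.
Proof.
rewrite inE; split.
- case/existsP => x /andP [xX /existsP [y /andP [yY /keyL [a [ha hb]]]]].
  by exists a; rewrite ha hb.
- case=> a [ha hb]; apply/existsP; exists (cls a); rewrite ha /=.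
  apply/existsP; exists (cls (vsub w a)); rewrite hb /=.
  by apply/keyL; exists a.
Qed.

Variable m : nat.
Hypothesis hm : (0 < m)%N.

Local Notation DD := {ffun 'I_m -> F * F}.
Definition theta (X : Lelt p) : {set DD * DD} :=
  [set u : DD * DD | [forall k, cls (vsub (u.2 k) (u.1 k)) \in X]].

Lemma thetaE X (u : DD * DD) : (u \in theta X) = [forall k, cls (vsub (u.2 k) (u.1 k)) \in X].
Proof. by rewrite inE. Qed.

Lemma theta_rep : weak_rep theta.
Proof.
split.
  move=> X Y eXY; apply/setP => z.
  have [w hw] := cls_surj z.
  have key : forall Z, (([ffun=> (0,0)], [ffun=> w]) \in theta Z) = (z \in Z).
    move=> Z; rewrite thetaE /=; apply/forallP/idP => [/(_ (Ordinal hm))|hz k];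
      by rewrite !ffunE vsub0 hw.
  by rewrite -!key eXY.
split.
  apply/setP => u; rewrite thetaE inE; apply/negP => /forallP /(_ (Ordinal hm)).
  by rewrite inE.
split.
  apply/setP => u; rewrite thetaE inE; apply/forallP => k; by rewrite inE.
split.
  move=> X Y; apply/setP => u; rewrite in_setI !thetaE.
  apply/forallP/andP => [H | [/forallP H1 /forallP H2] k].
  - by split; apply/forallP => k; have := H k; rewrite inE => /andP[].
  - by rewrite inE H1 H2.
split.
  apply/setP => [[u1 u2]]; rewrite thetaE !inE /=.
  apply/forallP/eqP => [H | ->].
  - apply/ffunP => k; apply/esym/eqP; move: (H k); by rewrite inE clsN vsub_eq0.
  - by move=> k; rewrite inE clsN vsub_eq0 eqxx.
split.
  move=> X; rewrite /Lconv; apply/setP => [[u1 u2]]; rewrite thetaE /rel_inv inE thetaE /=.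
  by apply/forallP/forallP => H k; rewrite cls_sym.
move=> X Y; apply/setP => [[u1 u2]]; rewrite thetaE /rel_comp inE /=.
apply/forallP/existsP => [H | [d /andP [H1 H2]] k].
- pose af k := odflt (0,0)
    [pick a | (cls a \in X) && (cls (vsub (vsub (u2 k) (u1 k)) a) \in Y)].
  have Haf : forall k, (cls (af k) \in X) && (cls (vsub (vsub (u2 k) (u1 k)) (af k)) \in Y).
    move=> k; rewrite /af; case: pickP => [a //| H0] /=.
    have [a [ha hb]] := (compP _ _ _).1 (H k).
    by move: (H0 a); rewrite ha hb.
  exists [ffun k => vadd (u1 k) (af k)]; rewrite !thetaE /=.
  apply/andP; split; apply/forallP => k; rewrite ffunE; have /andP [h1 h2] := Haf k.
  + suff -> : vsub (vadd (u1 k) (af k)) (u1 k) = af k by [].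
    by rewrite /vsub /vadd /=; case: (u1 k) => ? ?; case: (af k) => ? ? /=; congr (_, _); ring.
  + suff -> : vsub (u2 k) (vadd (u1 k) (af k)) = vsub (vsub (u2 k) (u1 k)) (af k) by [].
    by rewrite /vsub /vadd /=; congr (_, _); ring.
- move: H1 H2; rewrite !thetaE /= => /forallP H1 /forallP H2.
  apply/compP; exists (vsub (d k) (u1 k)); split; first exact: H1.
  suff -> : vsub (vsub (u2 k) (u1 k)) (vsub (d k) (u1 k)) = vsub (u2 k) (d k) by [].
  by rewrite /vsub /=; congr (_, _); ring.
Qed.

End Geo.

Theorem corollary9 (p : nat) (hp : prime_power p) (hp3 : 3 <= p) (m : nat) (hm : 1 <= m) :
  exists (D : finType) (theta : Lelt p -> {set D * D}),
    #|D| = p ^ (2 * m) /\ weak_rep theta.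
Proof.
case: hp => q [k [pq [k0 Ep]]].
have [F _ cardF] := pPrimePowerField pq k0.
rewrite -Ep in cardF.
exists {ffun 'I_m -> F * F}, (theta cardF m); split; last exact: theta_rep.
by rewrite card_ffun card_prod card_ord cardF expnM mulnn.
Qed.
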